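(* Let $\mathbf{H}$ be a finite commutative semihypergroup with states $e_1,\dots,e_n$ that is derived from a group. Then for every $i$ and every $k$, the $k$-th row $(a_{i,1}(k),\dots,a_{i,n}(k))$ of $A_i$ is a rearrangement of the column $a_{1,1}$ (equivalently, of any column $a_{j,l}$); that is, every row of every $A_i$ has the same multiset of entries as the columns.
   Context: A finite commutative semihypergroup $\mathbf{H}$ with $n$ states $e_1,\dots,e_n$ is given by a convolution $e_i*e_j=\sum_{k=1}^n a_{i,j}(k)e_k$ ($i,j=1,\dots,n$), extended bilinearly, where $a_{i,j}(k)\ge 0$, $\sum_{k=1}^n a_{i,j}(k)=1$ for all $i,j$, the convolution is associative and commutative ($a_{i,j}(k)=a_{j,i}(k)$). Let $a_{i,j}\in\mathbb{R}^n$ denote the column vector $(a_{i,j}(1),\dots,a_{i,j}(n))^T$; let $A_i$ be the $n\times n$ matrix with columns $a_{i,1},\dots,a_{i,n}$ (so its $(k,j)$ entry is $a_{i,j}(k)$) and $B_i$ the matrix with columns $a_{1,i},\dots,a_{n,i}$. $\mathbf{H}$ is called derived from a group if it satisfies condition (A): the set $\{a_{i,j}: 1\le i,j\le n\}$ contains exactly $n$ distinct vectors, and for each $i$ the columns of $A_i$ are linearly independent and the columns of $B_i$ are linearly independent. *)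

(* Defs.v *)
From HB Require Import structures.
From mathcomp Require Import all_boot all_order all_algebra all_fingroup.
Set Implicit Arguments. Unset Strict Implicit. Unset Printing Implicit Defensive.
Import Order.TTheory GRing.Theory Num.Theory.
Local Open Scope ring_scope.

(* Structure constants: a i j is the column vector a_{i,j} = (a_{i,j}(k))_k,
   i.e. e_i * e_j = \sum_k (a i j) k 0 e_k.  States are indexed by 'I_n. *)
Definition coef (R : pzRingType) n (a : 'I_n -> 'I_n -> 'cV[R]_n) i j k : R :=
  a i j k ord0.

Definition is_fcshg (R : realFieldType) n (a : 'I_n -> 'I_n -> 'cV[R]_n) :=
  [/\ (forall i j k, 0 <= coef a i j k),
      (forall i j, \sum_k coef a i j k = 1),
      (forall i j, a i j = a j i) &
      (* associativity: (e_i * e_j) * e_l = e_i * (e_j * e_l) *)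
      (forall i j l m,
         \sum_k coef a i j k * coef a k l m
         = \sum_k coef a j l k * coef a i k m)].

Definition Amx (R : pzRingType) n (a : 'I_n -> 'I_n -> 'cV[R]_n) i : 'M[R]_n :=
  \matrix_(k, j) coef a i j k.
Definition Bmx (R : pzRingType) n (a : 'I_n -> 'I_n -> 'cV[R]_n) i : 'M[R]_n :=
  \matrix_(k, j) coef a j i k.

Definition cols_indep (R : fieldType) n (M : 'M[R]_n) := row_free M^T.

Definition derived_from_group (R : realFieldType) n
    (a : 'I_n -> 'I_n -> 'cV[R]_n) :=
  [/\ size (undup [seq a ij.1 ij.2 | ij <- enum {: 'I_n * 'I_n}]) = n,
      (forall i, cols_indep (Amx a i)) &
      (forall i, cols_indep (Bmx a i))].

(* Main.v *)
Require Import Defs.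
From HB Require Import structures.
From mathcomp Require Import all_boot all_order all_algebra all_fingroup.
Import Order.TTheory GRing.Theory Num.Theory.
Local Open Scope ring_scope.

Lemma perm_inj_map (T : eqType) n (f : 'I_n -> 'I_n) (g : 'I_n -> T) :
  injective f ->
  perm_eq [seq g (f x) | x <- enum 'I_n] [seq g x | x <- enum 'I_n].
Proof.
move=> fi; rewrite (map_comp g f); apply: perm_map.
have u1 : uniq (map f (enum 'I_n)) by rewrite map_inj_uniq ?enum_uniq.
have sz : (size (enum 'I_n) <= size (map f (enum 'I_n)))%N by rewrite size_map.
have [_ eqs] := uniq_min_size u1 (fun x _ => mem_enum _ x) sz.
by apply: uniq_perm => //; apply: enum_uniq.
Qed.

Theorem corollary3 (R : realFieldType) (n : nat)
    (a : 'I_n -> 'I_n -> 'cV[R]_n) :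
  is_fcshg a -> derived_from_group a ->
  forall (i k j l : 'I_n),
    perm_eq [seq Amx a i k m | m <- enum 'I_n]
            [seq coef a j l m | m <- enum 'I_n].
Proof.
move=> [H0 H1 Hc Has] [Hsz HA _].
have I : forall i j j', a i j = a i j' -> j = j'.
  move=> i j j' e.
  have r : row j (Amx a i)^T = row j' (Amx a i)^T.
    by apply/rowP => m; rewrite !mxE /coef e.
  move: r; rewrite !rowE => /(row_free_inj (HA i)) /matrixP /(_ 0 j).
  rewrite !mxE; case: (j =P j') => // _; rewrite !eqxx /= => /eqP; by rewrite oner_eq0.
have E : forall i p q, exists j, a i j == a p q.
  move=> i p q.
  set L := [seq a ij.1 ij.2 | ij <- enum {: 'I_n * 'I_n}].
  have u1 : uniq [seq a i j | j <- enum 'I_n].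
    by rewrite map_inj_uniq ?enum_uniq // => x y; apply: I.
  have sub : {subset [seq a i j | j <- enum 'I_n] <= undup L}.
    move=> v /mapP [j _ ->]; rewrite mem_undup.
    by apply/mapP; exists (i, j); rewrite ?mem_enum.
  have sz : (size (undup L) <= size [seq a i j | j <- enum 'I_n])%N.
    by rewrite size_map size_enum_ord Hsz.
  have [_ eqs] := uniq_min_size u1 sub sz.
  have : a p q \in undup L.
    rewrite mem_undup.
    by apply/mapP; exists (p, q); rewrite ?mem_enum.
  by rewrite -eqs => /mapP [j _ ->]; exists j.
have K : forall i j l k k', a i k' = a k l -> coef a i j k = coef a j l k'.
  move=> i j l.
  pose pi k := xchoose (E i k l).
  have piP : forall k, a i (pi k) = a k l by move=> k; apply/eqP/(xchooseP (E i k l)).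
  have piI : injective pi.
    by move=> x y e; apply: (I l); rewrite Hc (Hc l y) -!piP e.
  suff K0 : forall k, coef a i j k = coef a j l (pi k).
    by move=> k k' e; rewrite K0; congr coef; apply: (I i); rewrite piP e.
  set v := \row_k (coef a i j k - coef a j l (pi k)).
  have : v *m (Amx a l)^T = 0 *m (Amx a l)^T.
    apply/rowP => m; rewrite mul0mx !mxE.
    under eq_bigr => k _ do rewrite !mxE mulrBl.
    rewrite sumrB.
    have -> : \sum_k coef a i j k * coef a l k m = \sum_k coef a i j k * coef a k l m.
      by apply: eq_bigr => k _; rewrite /coef (Hc l k).
    rewrite Has (reindex_inj piI) /=.
    under [X in X - _]eq_bigr => k _ do rewrite /coef piP (Hc k l).
    by rewrite subrr.
  move/(row_free_inj (HA l)) => v0 k.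
  by apply/eqP; rewrite -subr_eq0; move/matrixP: v0 => /(_ 0 k); rewrite !mxE => ->.
have C1 : forall i j l, perm_eq [seq coef a i j m | m <- enum 'I_n]
                                [seq coef a j l m | m <- enum 'I_n].
  move=> i j l.
  pose pi k := xchoose (E i k l).
  have piP : forall k, a i (pi k) = a k l by move=> k; apply/eqP/(xchooseP (E i k l)).
  have piI : injective pi.
    by move=> x y e; apply: (I l); rewrite Hc (Hc l y) -!piP e.
  rewrite (eq_map (fun k => K i j l k (pi k) (piP k))).
  exact: perm_inj_map.
have C : forall i j p q, perm_eq [seq coef a i j m | m <- enum 'I_n]
                                [seq coef a p q m | m <- enum 'I_n].
  move=> i j p q.
  apply: perm_trans (C1 i j q) _; apply: perm_trans (C1 j q p) _.
  by rewrite (eq_map (fun m => congr1 (fun v : 'cV[R]_n => v m ord0) (Hc q p))).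
move=> i k j l.
pose rho m := xchoose (E m i k).
have rhoP : forall m, a m (rho m) = a i k by move=> m; apply/eqP/(xchooseP (E m i k)).
have rhoI : injective rho.
  move=> x y e; apply: (I (rho x)); by rewrite (Hc _ x) rhoP e (Hc _ y) rhoP.
have eqm : forall m, Amx a i k m = coef a i i (rho m).
  move=> m; rewrite mxE; symmetry; apply: K.
  by rewrite (Hc _ m) rhoP.
under eq_map => m do rewrite eqm.
apply: perm_trans (@perm_inj_map _ _ _ (coef a i i) rhoI) (C _ _ _ _).
Qed.
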